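(* Assume (a) and (b). For all $P\in\triangle_Q(\mathcal{M})$, $$G\big(z,P,P^{(Q,\lambda)}_{\Theta|Z=z}\big)=\lambda\int\Big(1-\frac{dP}{dP^{(Q,\lambda)}_{\Theta|Z=z}}(\theta)\Big)\Big(f\Big(\frac{dP^{(Q,\lambda)}_{\Theta|Z=z}}{dQ}(\theta)\Big)+f^*\Big(-\frac{L_z(\theta)+N_{Q,z}(\lambda)}{\lambda}\Big)\Big)dQ(\theta).$$
   Context: Setting. - $\mathcal{M}\subseteq\mathbb{R}^d$; $h:\mathcal{M}\times\mathcal{X}\to\mathcal{Y}$; the loss $\ell:\mathcal{Y}\times\mathcal{Y}\to[0,\infty)$ satisfies $\ell(y,y)=0$. - For a dataset $z=((x_1,y_1),\dots,(x_n,y_n))$, $L_z(\theta)=\frac1n\sum_i\ell(h(\theta,x_i),y_i)$ and $R_z(P)=\int L_z\,dP$. - $G(z,P_1,P_2)=R_z(P_1)-R_z(P_2)$. - $Q$ is a Borel probability measure on $\mathcal{M}$, and $\triangle_Q(\mathcal{M})$ is the set of Borel probability measures $P\ll Q$. Fix $\lambda>0$. - $f:[0,\infty)\to\mathbb{R}$ is convex with $f(1)=0$; $D_f(P\|Q)=\int f(\frac{dP}{dQ})dQ$. - $\dot f$ is the derivative of $f$ on $(0,\infty)$ and $\dot f^{-1}$ its inverse. - $f^*(t)=\sup_x(tx-f(x))$ is the Legendre–Fenchel transform. Assumptions. - (a) $f$ is strictly convex and differentiable. - (b) There exists $\beta$ with $\dot f^{-1}\big(-\frac{\beta+L_z(\theta)}{\lambda}\big)>0$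 on $\operatorname{supp}Q$ and $\int\dot f^{-1}\big(-\frac{\beta+L_z(\theta)}{\lambda}\big)dQ=1$. Normalization and solution. $N_{Q,z}(\lambda)$ denotes this $\beta$ (the normalization function). $P^{(Q,\lambda)}_{\Theta|Z=z}$ is the unique minimizer of $R_z(P)+\lambda D_f(P\|Q)$ over $\triangle_Q(\mathcal{M})$. It satisfies $\frac{dP^{(Q,\lambda)}_{\Theta|Z=z}}{dQ}(\theta)=\dot f^{-1}\big(-\frac{N_{Q,z}(\lambda)+L_z(\theta)}{\lambda}\big)$ for $\theta\in\operatorname{supp}Q$, and it is mutually absolutely continuous with $Q$. *)

(* Defs.v *)
From HB Require Import structures.
From mathcomp Require Import all_boot all_order all_algebra.
From mathcomp Require Import all_classical all_reals all_analysis.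
Set Implicit Arguments. Unset Strict Implicit. Unset Printing Implicit Defensive.
Import Order.TTheory GRing.Theory Num.Theory.
Import numFieldNormedType.Exports.
Local Open Scope classical_set_scope.
Local Open Scope ring_scope.

Section defs.
Variable R : realType.

Definition emp_risk (P X Y : Type) (h : P -> X -> Y) (loss : Y -> Y -> R)
  (n : nat) (z : 'I_n -> X * Y) (theta : P) : R :=
  (n%:R)^-1 * \sum_(i < n) loss (h theta (z i).1) (z i).2.

Definition convex_nonneg (f : R -> R) : Prop :=
  forall x y t : R, 0 <= x -> 0 <= y -> 0 <= t <= 1 ->
    f (t * x + (1 - t) * y) <= t * f x + (1 - t) * f y.

Definition strictly_convex_nonneg (f : R -> R) : Prop :=
  forall x y t : R, 0 <= x -> 0 <= y -> x != y -> 0 < t < 1 ->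
    f (t * x + (1 - t) * y) < t * f x + (1 - t) * f y.

Definition differentiable_pos (f : R -> R) : Prop :=
  forall x : R, 0 < x -> derivable f x 1.

(* \dot f^{-1}(y): the (unique, by strict convexity) x > 0 with \dot f x = y;
   defaults to 0 when no such x exists *)
Definition fdot_inv (f : R -> R) (y : R) : R :=
  xget 0 [set x : R | 0 < x /\ derive1 f x = y].

Definition fstar (f : R -> R) (t : R) : \bar R :=
  ereal_sup [set ((t * x - f x)%:E) | x in [set x : R | 0 <= x]].

Definition msupp (dim : nat) (Q : set (dim.-tuple R) -> \bar R)
  : set (dim.-tuple R) :=
  [set th | forall e : R, 0 < e ->
     (0 < Q [set x | forall i : 'I_dim, (`|tnth x i - tnth th i| < e)%R])%E].

End defs.

(* Main.v *)
Require Import Defs.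
From HB Require Import structures.
From mathcomp Require Import all_boot all_order all_algebra.
From mathcomp Require Import all_classical all_reals all_analysis.
From mathcomp Require Import measurable_realfun ring lra.
Import Order.TTheory GRing.Theory Num.Theory.
Import numFieldNormedType.Exports.
Local Open Scope classical_set_scope.
Local Open Scope ring_scope.
Local Open Scope charge_scope.
Set Implicit Arguments. Unset Strict Implicit. Unset Printing Implicit Defensive.

Section onesided.
Variable R : realType.
Implicit Types (f : R -> R).

Lemma RU f c s d : derivable f c 1 -> 0 < d ->
  (forall h, 0 < h < d -> f (h + c) - f c <= s * h) -> derive1 f c <= s.
Proof.
move=> dfc d0 H; rewrite derive1E.
rewrite ['D_1 f c]cvg_at_rightE; last exact: dfc.
apply: limr_le.
  rewrite -(cvg_at_rightE (fun h : R => h^-1 *: ((f \o shift c) _ - f c))) //.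
  apply: cvg_trans dfc; apply: cvg_app.
  move=> A [e egt0 Ae]; exists e => // x xe xgt0; apply: Ae => //.
  exact/lt0r_neq0.
near=> h.
have h0 : 0 < h by near: h; exists 1 => /=.
have hd : h < d.
  near: h; exists d => // h /=; rewrite distrC subr0 => hd h0.
  by rewrite (le_lt_trans (ler_norm _)).
rewrite /= [_%:A]mulr1 ler_pdivrMl //.
by rewrite [h * s]mulrC; apply: H; rewrite h0 hd.
Unshelve. all: by end_near. Qed.

Lemma RL f c s d : derivable f c 1 -> 0 < d ->
  (forall h, 0 < h < d -> s * h <= f (h + c) - f c) -> s <= derive1 f c.
Proof.
move=> dfc d0 H; rewrite derive1E.
rewrite ['D_1 f c]cvg_at_rightE; last exact: dfc.
apply: limr_ge.
  rewrite -(cvg_at_rightE (fun h : R => h^-1 *: ((f \o shift c) _ - f c))) //.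
  apply: cvg_trans dfc; apply: cvg_app.
  move=> A [e egt0 Ae]; exists e => // x xe xgt0; apply: Ae => //.
  exact/lt0r_neq0.
near=> h.
have h0 : 0 < h by near: h; exists 1 => /=.
have hd : h < d.
  near: h; exists d => // h /=; rewrite distrC subr0 => hd h0.
  by rewrite (le_lt_trans (ler_norm _)).
rewrite /= [_%:A]mulr1 ler_pdivlMl //.
by rewrite [h * s]mulrC; apply: H; rewrite h0 hd.
Unshelve. all: by end_near. Qed.

Lemma LU f c s d : derivable f c 1 -> 0 < d ->
  (forall h, - d < h < 0 -> s * h <= f (h + c) - f c) -> derive1 f c <= s.
Proof.
move=> dfc d0 H; rewrite derive1E.
rewrite ['D_1 f c]cvg_at_leftE; last exact: dfc.
apply: limr_le.
  rewrite -(cvg_at_leftE (fun h : R => h^-1 *: ((f \o shift c) _ - f c))) //.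
  apply: cvg_trans dfc; apply: cvg_app.
  move=> A [e egt0 Ae]; exists e => // x xe xgt0; apply: Ae => //.
  exact/ltr0_neq0.
near=> h.
have h0 : h < 0 by near: h; exists 1 => /=.
have hd : - d < h.
  near: h; exists d => // h /=; rewrite distrC subr0 => hd h0.
  by rewrite ltrNl (le_lt_trans _ hd)// -normrN ler_norm.
rewrite /= [_%:A]mulr1 ler_ndivrMl //.
by rewrite [h * s]mulrC; apply: H; rewrite h0 hd.
Unshelve. all: by end_near. Qed.

Lemma LL f c s d : derivable f c 1 -> 0 < d ->
  (forall h, - d < h < 0 -> f (h + c) - f c <= s * h) -> s <= derive1 f c.
Proof.
move=> dfc d0 H; rewrite derive1E.
rewrite ['D_1 f c]cvg_at_leftE; last exact: dfc.
apply: limr_ge.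
  rewrite -(cvg_at_leftE (fun h : R => h^-1 *: ((f \o shift c) _ - f c))) //.
  apply: cvg_trans dfc; apply: cvg_app.
  move=> A [e egt0 Ae]; exists e => // x xe xgt0; apply: Ae => //.
  exact/ltr0_neq0.
near=> h.
have h0 : h < 0 by near: h; exists 1 => /=.
have hd : - d < h.
  near: h; exists d => // h /=; rewrite distrC subr0 => hd h0.
  by rewrite ltrNl (le_lt_trans _ hd)// -normrN ler_norm.
rewrite /= [_%:A]mulr1 ler_ndivlMl //.
by rewrite [h * s]mulrC; apply: H; rewrite h0 hd.
Unshelve. all: by end_near. Qed.
End onesided.

Section cvx.
Variable R : realType.
Variable f : R -> R.
Hypothesis cvx : convex_nonneg f.
Hypothesis scvx : strictly_convex_nonneg f.
Hypothesis df : differentiable_pos f.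

Lemma F1R x y : 0 < x -> x < y -> derive1 f x <= (f y - f x) / (y - x).
Proof.
move=> x0 xy; have yx0 : 0 < y - x by rewrite subr_gt0.
apply: (RU (df x0) yx0) => h /andP[h0 hd].
set t := h / (y - x).
have t01 : 0 <= t <= 1.
  apply/andP; split; first by rewrite /t divr_ge0 // ltW.
  by rewrite /t ler_pdivrMr // mul1r ltW.
have := cvx (ltW (lt_trans x0 xy)) (ltW x0) t01.
have -> : t * y + (1 - t) * x = h + x.
  by rewrite /t; field; rewrite gt_eqF.
move=> H; rewrite -subr_ge0.
have -> : (f y - f x) / (y - x) * h - (f (h + x) - f x)
   = (t * f y + (1 - t) * f x) - f (h + x).
  by rewrite /t; field; rewrite gt_eqF.
by rewrite subr_ge0.
Qed.

Lemma F1L x y : 0 < x -> 0 <= y -> y < x -> (f x - f y) / (x - y) <= derive1 f x.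
Proof.
move=> x0 y0 yx; have xy0 : 0 < x - y by rewrite subr_gt0.
apply: (LL (df x0) xy0) => h /andP[hd h0].
set t := - h / (x - y).
have t01 : 0 <= t <= 1.
  apply/andP; split; first by rewrite /t divr_ge0 // ?oppr_ge0 ltW.
  by rewrite /t ler_pdivrMr // mul1r ltW // ltrNl.
have := cvx y0 (ltW x0) t01.
have -> : t * y + (1 - t) * x = h + x.
  by rewrite /t; field; rewrite gt_eqF.
move=> H; rewrite -subr_ge0.
have -> : (f x - f y) / (x - y) * h - (f (h + x) - f x)
   = (t * f y + (1 - t) * f x) - f (h + x).
  by rewrite /t; field; rewrite gt_eqF.
by rewrite subr_ge0.
Qed.

Lemma tangent x y : 0 < x -> 0 <= y -> f x + derive1 f x * (y - x) <= f y.
Proof.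
move=> x0 y0; case: (ltgtP x y) => [xy|yx|<-]; last by rewrite subrr mulr0 addr0.
- have H := F1R x0 xy.
  have : derive1 f x * (y - x) <= f y - f x.
    by rewrite -ler_pdivlMr ?subr_gt0.
  lra.
- have := F1L x0 y0 yx => H.
  have : f x - f y <= derive1 f x * (x - y).
    by rewrite -ler_pdivrMr ?subr_gt0.
  lra.
Qed.

Lemma phi_strict x y : 0 < x -> x < y -> derive1 f x < derive1 f y.
Proof.
move=> x0 xy; set m := (x + y) / 2.
have xm : x < m by rewrite /m; lra.
have my : m < y by rewrite /m; lra.
have m0 : 0 < m by lra.
have h1 := F1R x0 xm.
have h2 := F1L (lt_trans x0 xy) (ltW m0) my.
have sc : f m < 2^-1 * f y + (1 - 2^-1) * f x.
  have -> : m = 2^-1 * y + (1 - 2^-1) * x by rewrite /m; field.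
  apply: scvx; rewrite ?ltW ?(lt_trans x0 xy) //; first by rewrite gt_eqF.
  by rewrite invr_gt0 ltr0n /= invf_lt1 // ltr1n.
apply: (le_lt_trans h1); apply: lt_le_trans h2.
have -> : m - x = (y - x) / 2 by rewrite /m; field.
have -> : y - m = (y - x) / 2 by rewrite /m; field.
rewrite ltr_pM2r ?invr_gt0 ?divr_gt0 ?subr_gt0 //.
lra.
Qed.


Lemma darboux a b v : 0 < a -> a < b -> derive1 f a < v < derive1 f b ->
  exists c, 0 < c /\ derive1 f c = v.
Proof.
move=> a0 ab /andP[av vb].
pose k u := f u - v * u.
have kc : {within `[a, b], continuous k}.
  apply: continuous_in_subspaceT => u; rewrite inE /= in_itv /= => /andP[au _].
  have u0 : 0 < u by apply: lt_le_trans au.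
  apply: continuousB.
    by apply: differentiable_continuous; apply/derivable1_diffP; exact: df.
  by apply: continuousM; [exact: cvg_cst|exact: cvg_id].
have [c cab cmin] := EVT_min (ltW ab) kc.
move: cab; rewrite in_itv /= => /andP[ac cb].
have c0 : 0 < c by apply: lt_le_trans ac.
have R1 : c < b -> v <= derive1 f c.
  move=> cb'; apply: (RL (df c0) (_ : 0 < b - c)); first by rewrite subr_gt0.
  move=> h /andP[h0 hd].
  have := cmin (h + c); rewrite in_itv /= /k.
  have -> : (a <= h + c) && (h + c <= b).
    by apply/andP; split; lra.
  move=> /(_ isT); lra.
have R2 : a < c -> derive1 f c <= v.
  move=> ac'; apply: (LU (df c0) (_ : 0 < c - a)); first by rewrite subr_gt0.
  move=> h /andP[hd h0].
  have := cmin (h + c); rewrite in_itv /= /k.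
  have -> : (a <= h + c) && (h + c <= b).
    by apply/andP; split; lra.
  move=> /(_ isT); lra.
exists c; split => //.
have ac' : a < c.
  rewrite lt_neqAle ac andbT; apply/eqP => ea.
  by move: R1; rewrite -ea => /(_ ab); lra.
have cb' : c < b.
  rewrite lt_neqAle cb andbT; apply/eqP => eb.
  by move: R2; rewrite eb => /(_ ab); lra.
by apply/eqP; rewrite eq_le R2 // R1.
Qed.

Definition Dset := [set y | exists x, 0 < x /\ derive1 f x = y].

Lemma Dset_itv : is_interval Dset.
Proof.
move=> y1 y2 [a [a0 <-]] [b [b0 <-]] z /andP[z1 z2].
case: (eqVneq z (derive1 f a)) => [->|za]; first by exists a.
case: (eqVneq z (derive1 f b)) => [->|zb]; first by exists b.
have az : derive1 f a < z by rewrite lt_neqAle eq_sym za z1.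
have zb' : z < derive1 f b by rewrite lt_neqAle zb z2.
have ab : a < b.
  rewrite ltNge; apply/negP => ba.
  case: (ltgtP b a) => [lba|lab|eba].
  - by have := phi_strict b0 lba; lra.
  - lra.
  - by move: az; rewrite -eba; lra.
have := @darboux a b z a0 ab; rewrite az zb' => /(_ isT) [c [c0 <-]].
by exists c.
Qed.

Lemma inv_ge0 y : 0 <= fdot_inv f y.
Proof.
rewrite /fdot_inv; case: (xgetP 0 [set x | 0 < x /\ derive1 f x = y]).
  by move=> x _ [/ltW].
by move=> _.
Qed.

Lemma inv_pos y : 0 < fdot_inv f y -> derive1 f (fdot_inv f y) = y.
Proof.
rewrite /fdot_inv; case: (xgetP 0 [set x | 0 < x /\ derive1 f x = y]).
  by move=> x _ [].
by move=> _; rewrite ltxx.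
Qed.

Lemma inv_spec x y : 0 < x -> derive1 f x = y -> fdot_inv f y = x.
Proof.
move=> x0 xy; rewrite /fdot_inv.
have [x' -> [x'0 x'y]] : exists2 x', xget 0 [set x | 0 < x /\ derive1 f x = y] = x'
   & 0 < x' /\ derive1 f x' = y.
  exists (xget 0 [set x | 0 < x /\ derive1 f x = y]); first by [].
  by apply: (@xgetPex _ 0 [set x | 0 < x /\ derive1 f x = y]); exists x.
case: (ltgtP x x') => // [l|l].
- by have := phi_strict x0 l; lra.
- by have := phi_strict x'0 l; lra.
Qed.

Lemma measurable_inv : measurable_fun setT (fdot_inv f).
Proof.
apply: (measurability (@measurable_realfun.RGenCInfty.G R)) => [|/= _ [_] [r] -> <-].
  exact: measurable_realfun.RGenCInfty.measurableE.
rewrite setTI.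
case: (leP r 0) => r0.
  rewrite [X in measurable X](_ : _ = setT) //.
  by apply/seteqP; split => // y _ /=; rewrite in_itv /= andbT (le_trans r0) // inv_ge0.
rewrite [X in measurable X](_ : _ = Dset `&` `[derive1 f r, +oo[%classic).
  by apply: measurableI; [exact: measurable_realfun.is_interval_measurable Dset_itv|exact: measurable_itv].
apply/seteqP; split => y /=; rewrite !in_itv /= !andbT.
  move=> ry; have p0 : 0 < fdot_inv f y by apply: lt_le_trans ry.
  split; first by exists (fdot_inv f y); split => //; exact: inv_pos.
  rewrite -(inv_pos p0).
  case: (ltgtP r (fdot_inv f y)) => [l|l|->] //.
  - by apply/ltW/phi_strict.
  - lra.
move=> [[x [x0 <-]]] rx; rewrite (inv_spec x0 erefl).
rewrite leNgt; apply/negP => l.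
by have := phi_strict x0 l; lra.
Qed.


Lemma fstar_at x : 0 < x ->
  fstar f (derive1 f x) = (derive1 f x * x - f x)%:E.
Proof.
move=> x0; apply/eqP; rewrite eq_le; apply/andP; split.
  apply: ge_ereal_sup => _ [y /= y0 <-]; rewrite lee_fin.
  by have := tangent x0 y0; lra.
by apply: ereal_sup_ubound; exists x => //=; exact: ltW.
Qed.

End cvx.

Import HBNNSimple.
Section nullint.
Local Open Scope ereal_scope.
Context d (T : measurableType d) (R : realType).
Variable mu : {measure set T -> \bar R}.

Lemma int_null_le (N : set T) (F G : T -> \bar R) : measurable N -> mu N = 0 ->
  (forall x, 0 <= F x) -> (forall x, 0 <= G x) ->
  (forall x, ~ N x -> F x = G x) -> \int[mu]_x F x <= \int[mu]_x G x.
Proof.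
move=> mN N0 F0 G0 FG.
rewrite ge0_integralTE // ge0_integralTE //.
apply: ge_ereal_sup => _ [h /= hF <-].
pose h' := mul_nnsfun h (indic_nnsfun R (measurableC mN)).
have h'E x : h' x = (h x * \1_(~` N) x)%R by rewrite /= mindicE.
have -> : sintegral mu h = sintegral mu h'.
  rewrite -!integralT_nnsfun.
  apply: ge0_ae_eq_integral => //.
  - by apply/measurable_EFinP; exact: measurable_funPT.
  - by apply/measurable_EFinP; exact: measurable_funPT.
  - by move=> x _; rewrite lee_fin.
  - by move=> x _; rewrite lee_fin.
  exists N; split => // x /= /not_implyP[_]; apply: contra_notP => Nx.
  by rewrite /= mindicE mem_set ?mulr1.
apply: ereal_sup_ubound; exists h' => //= x.
rewrite /= mindicE; case: (boolP (x \in ~` N)) => [/set_mem xN|_].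
  by rewrite mulr1 -FG.
by rewrite mulr0.
Qed.

Lemma int_null (N : set T) (F G : T -> \bar R) : measurable N -> mu N = 0 ->
  (forall x, ~ N x -> F x = G x) -> \int[mu]_x F x = \int[mu]_x G x.
Proof.
move=> mN N0 FG; rewrite integralE [RHS]integralE.
have Hp : forall x, ~ N x -> F^\+ x = G^\+ x by move=> x /FG; rewrite !funeposE => ->.
have Hn : forall x, ~ N x -> F^\- x = G^\- x by move=> x /FG; rewrite !funenegE => ->.
congr (_ - _); apply/eqP; rewrite eq_le; apply/andP; split.
- apply: (int_null_le mN N0) => x; [exact: funepos_ge0|exact: funepos_ge0|by move/Hp].
- apply: (int_null_le mN N0) => x; [exact: funepos_ge0|exact: funepos_ge0|by move/Hp].
- apply: (int_null_le mN N0) => x; [exact: funeneg_ge0|exact: funeneg_ge0|by move/Hn].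
- apply: (int_null_le mN N0) => x; [exact: funeneg_ge0|exact: funeneg_ge0|by move/Hn].
Qed.
End nullint.

Section supp.
Context (R : realType) (dim : nat) (Q : {measure set (dim.-tuple R) -> \bar R}).

Definition box (c : 'I_dim -> R) (e : R) : set (dim.-tuple R) :=
  [set x | forall i, `|tnth x i - c i| < e].

Lemma measurable_box c e : measurable (box c e).
Proof.
have -> : box c e = \bigcap_(i in [set: 'I_dim])
    ((fun x : dim.-tuple R => tnth x i) @^-1` `]c i - e, c i + e[%classic).
  apply/seteqP; split => x /=.
    by move=> H i _; rewrite /= in_itv /= -ltr_distlC distrC; exact: H.
  by move=> H i; have := H i I; rewrite /= in_itv /= -ltr_distlC distrC.
apply: fin_bigcap_measurable; first exact: finite_finset.
move=> i _; rewrite -[X in measurable X]setTI.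
by apply: measurable_tnth => //; exact: measurable_itv.
Qed.

Definition boxq (qr : dim.-tuple rat * rat) :=
  box (fun i => ratr (tnth qr.1 i)) (ratr qr.2).

Lemma supp_null : exists N, [/\ measurable N, Q N = 0%E &
  forall th, ~ N th -> msupp Q th].
Proof.
pose B k : set (dim.-tuple R) := [set x | exists qr, unpickle k = Some qr /\
   Q.-negligible (boxq qr) /\ boxq qr x].
have nB k : Q.-negligible (B k).
  case: (pselect (exists qr, unpickle k = Some qr /\ Q.-negligible (boxq qr))).
    move=> [qr [uk nq]]; apply: (negligibleS _ nq) => x [qr' [uk' [_ bx]]].
    by move: uk'; rewrite uk => -[->].
  move=> H; rewrite [B k](_ : _ = set0); first exact: negligible_set0.
  apply/seteqP; split => // x [qr [uk [nq _]]]; apply: H; by exists qr.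
have [N [mN N0 BN]] := negligible_bigcup nB.
exists N; split => // th Nth e e0.
apply: contrapT => /negP; rewrite -leNgt => Qle.
have Q0 : Q (box (fun i => tnth th i) e) = 0%E.
  apply/eqP; rewrite eq_le Qle measure_ge0 //.
have e3 : 0 < e / 3 by rewrite divr_gt0.
have qi : forall i : 'I_dim, exists q : rat, ratr q \in `]tnth th i - e / 3, tnth th i + e / 3[.
  move=> i; apply: rat_in_itvoo; lra.
have [r rE] : exists r : rat, ratr r \in `]e / 3, 2 * e / 3[.
  apply: rat_in_itvoo; lra.
pose qt := [tuple (xchoose (qi i)) | i < dim].
apply: Nth; apply: BN; exists (pickle (qt, r)) => //.
exists (qt, r); split; first by rewrite pickleK.
have sub : boxq (qt, r) `<=` box (fun i => tnth th i) e.
  move=> x /= H i; have := H i; rewrite tnth_mktuple.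
  have := xchooseP (qi i); rewrite in_itv /= => /andP[h1 h2].
  move: rE; rewrite in_itv /= => /andP[r1 r2].
  rewrite !ltr_distlC => /andP[a1 a2]; apply/andP; split; lra.
split.
  apply: (negligibleS sub); exists (box (fun i => tnth th i) e); split => //.
  exact: measurable_box.
move=> i /=; rewrite tnth_mktuple.
have := xchooseP (qi i); rewrite in_itv /= => /andP[h1 h2].
move: rE; rewrite in_itv /= => /andP[r1 r2].
rewrite ltr_distlC; apply/andP; split; lra.
Qed.
End supp.

Section aehelp.
Local Open Scope ereal_scope.
Context d (T : measurableType d) (R : realType).
Variable mu : {measure set T -> \bar R}.

Lemma ae_ex (P : T -> Prop) : (\forall x \ae mu, P x) ->
  exists N, [/\ measurable N, mu N = 0 & forall x, ~ N x -> P x].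
Proof.
case=> N [mN N0 sub]; exists N; split => // x Nx.
by apply: contrapT => nP; apply: Nx; apply: sub.
Qed.

Lemma nullU (A B : set T) : measurable A -> measurable B -> mu A = 0 -> mu B = 0 ->
  mu (A `|` B) = 0.
Proof.
move=> mA mB A0 B0; apply/eqP; rewrite -measure_le0 -(adde0 0) -{1}A0 -B0.
exact: measureU2.
Qed.
End aehelp.

Unset Implicit Arguments.
Theorem theorem4 (R : realType) (dim : nat) (X Y : Type)
  (M : set (dim.-tuple R)) (h : dim.-tuple R -> X -> Y)
  (loss : Y -> Y -> R) (n : nat) (z : 'I_n -> X * Y)
  (Q : probability (dim.-tuple R) R) (lam : R) (f : R -> R) (beta : R)
  (Pstar P : probability (dim.-tuple R) R) :
  let Lz := emp_risk h loss z in
  let g := fun th => fdot_inv f (- (beta + Lz th) / lam) in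
  (* setting *)
  measurable M -> Q M = 1%E ->
  (forall y y', 0 <= loss y y') -> (forall y, loss y y = 0) ->
  0 < lam ->
  convex_nonneg f -> f 1 = 0 ->
  (* assumption (a) *)
  strictly_convex_nonneg f -> differentiable_pos f ->
  (* assumption (b), with N_{Q,z}(lam) := beta *)
  (forall th, msupp Q th -> 0 < g th) ->
  (\int[Q]_th (g th)%:E = 1)%E ->
  (* Pstar = P^{(Q,lam)}_{Theta|Z=z}, given by its density g w.r.t. Q *)
  (forall A, measurable A -> Pstar A = \int[Q]_(th in A) (g th)%:E)%E ->
  (* P in triangle_Q(M) *)
  charge_of_finite_measure P `<< Q ->
  (* the risks R_z(P), R_z(Pstar) are (finite) real numbers *)
  P.-integrable setT (EFin \o Lz) -> Pstar.-integrable setT (EFin \o Lz) ->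
  (\int[P]_th (Lz th)%:E - \int[Pstar]_th (Lz th)%:E
   = lam%:E * \int[Q]_th
       ((1 - ('d (charge_of_finite_measure P) '/d Pstar) th)
        * ((f (fine (('d (charge_of_finite_measure Pstar) '/d Q) th)))%:E
           + fstar f (- (Lz th + beta) / lam))))%E.


Proof.
move=> Lz g mM QM1 loss0 lossrefl lam0 cvx f1 scvx dfp gpos gint PstarE PQ intP intPs.
have Lz0 th : 0 <= Lz th.
  rewrite /Lz /emp_risk mulr_ge0 ?invr_ge0 //.
  by apply: sumr_ge0 => i _; exact: loss0.
have mLz : measurable_fun setT Lz.
  by apply/measurable_EFinP; exact: (measurable_int _ intP).
have mt : measurable_fun setT (fun th => - (beta + Lz th) / lam).
  apply: measurable_funM; last exact: measurable_cst.
  apply: measurable_funN; apply: measurable_funD => //; exact: measurable_cst.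
have mg : measurable_fun setT g.
  exact: (measurableT_comp (measurable_inv cvx scvx dfp) mt).
have g0 th : 0 <= g th by exact: inv_ge0.
have [N0 [mN0 QN0 HN0]] := supp_null Q.
have gsupp th : ~ N0 th -> 0 < g th /\ derive1 f (g th) = - (beta + Lz th) / lam.
  move=> /HN0 /gpos gp; split => //; exact: inv_pos.
have intg : Q.-integrable setT (EFin \o g).
  apply/integrableP; split; first exact/measurable_EFinP.
  under eq_integral do rewrite gee0_abs ?lee_fin //.
  by rewrite gint ltry.
have PsQ : Pstar `<< Q.
  apply/null_content_dominatesP => A mA QA0.
  rewrite PstarE //; apply: null_set_integral => //.
  exact/measurable_EFinP/measurable_funTS.
have QPs : Q `<< Pstar.
  apply/null_content_dominatesP => A mA PA0.
  have : (\int[Q]_(x in A) `|(g x)%:E| = 0)%E.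
    apply: (@eq_trans _ _ (Pstar A)); last exact: PA0.
    rewrite PstarE //; apply: eq_integral => x _.
    by rewrite gee0_abs ?lee_fin.
  have mgA : measurable_fun A (EFin \o g).
    by apply/measurable_EFinP; exact: measurable_funTS.
  move/(ae_eq_integral_abs Q mA mgA).
  case=> N1 [mN1 QN1 sub1].
  apply/eqP; rewrite -measure_le0 -(adde0 0%E) -{1}QN0 -QN1.
  apply: le_trans (measureU2 _ _ _) => //.
  apply: le_measure; rewrite ?inE //; first exact: measurableU.
  move=> x Ax; case: (pselect (N0 x)) => [|nx]; first by left.
  right; apply: sub1 => /= /(_ Ax) []; apply/eqP.
  by rewrite gt_eqF //; case: (gsupp x nx).
have PPs : P `<< Pstar := null_dominates_trans PQ QPs.
pose rho := Radon_Nikodym_SigmaFinite.f Pstar Q.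
pose pi := Radon_Nikodym_SigmaFinite.f P Q.
pose rr := Radon_Nikodym_SigmaFinite.f P Pstar.
have [N1 [mN1 QN1 H1]] := ae_ex (ae_eq_Radon_Nikodym_SigmaFinite PsQ measurableT).
have ae_b : ae_eq Q setT rho (EFin \o g).
  apply: integral_ae_eq => //; first exact: Radon_Nikodym_SigmaFinite.f_integrable.
    exact/measurable_EFinP.
  move=> E _ mE; rewrite -Radon_Nikodym_SigmaFinite.f_integral //.
  exact: PstarE.
have [N2 [mN2 QN2 H2]] := ae_ex ae_b.
have [N3 [mN3 PN3 H3]] := ae_ex (ae_eq_Radon_Nikodym_SigmaFinite PPs measurableT).
have QN3 : Q N3 = 0%E.
  by move/null_content_dominatesP : QPs => /(_ N3 mN3 PN3).
have [N4 [mN4 QN4 H4]] := ae_ex (Radon_Nikodym_SigmaFinite.chain_rule PPs PsQ measurableT).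
pose N := N0 `|` N1 `|` N2 `|` N3 `|` N4.
have mN : measurable N by repeat apply: measurableU.
have QN : Q N = 0%E by repeat apply: nullU => //; repeat apply: measurableU.
pose H th := Lz th * fine (pi th) + beta * fine (pi th) - (Lz th * g th + beta * g th).
have Hpt : forall x, ~ N x ->
  ((1 - ('d (charge_of_finite_measure P) '/d Pstar) x)
        * ((f (fine (('d (charge_of_finite_measure Pstar) '/d Q) x)))%:E
           + fstar f (- (Lz x + beta) / lam)))%E = (lam^-1 * H x)%:E.
  move=> x Nx.
  have nN0 : ~ N0 x by move=> ?; apply: Nx; left; left; left; left.
  have nN1 : ~ N1 x by move=> ?; apply: Nx; left; left; left; right.
  have nN2 : ~ N2 x by move=> ?; apply: Nx; left; left; right.
  have nN3 : ~ N3 x by move=> ?; apply: Nx; left; right.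
  have nN4 : ~ N4 x by move=> ?; apply: Nx; right.
  have [gp dg] := gsupp x nN0.
  have e1 := H1 x nN1 I; have e2 := H2 x nN2 I; have e3 := H3 x nN3 I.
  have e4 := H4 x nN4 I.
  rewrite /rho /rr /pi in e1 e2 e3 e4.
  rewrite -e1 -e3 e2 /= [Lz x + beta]addrC -dg (fstar_at cvx dfp gp) dg.
  have rrfin : Radon_Nikodym_SigmaFinite.f P Pstar x \is a fin_num :=
    Radon_Nikodym_SigmaFinite.f_fin_num PPs x.
  have piE : fine (pi x) = fine (Radon_Nikodym_SigmaFinite.f P Pstar x) * g x.
    rewrite /pi e4 /= e2.
    by rewrite -[in LHS](fineK rrfin) -EFinM.
  rewrite /H piE -(fineK rrfin) -EFinD -EFinD -EFinM /=; congr EFin.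
  by field; rewrite gt_eqF.
have Lz0E x : (0 <= (Lz x)%:E)%E by rewrite lee_fin.
have mLzE : measurable_fun setT (EFin \o Lz) by exact/measurable_EFinP.
have pifin x : pi x \is a fin_num := Radon_Nikodym_SigmaFinite.f_fin_num PQ x.
have iLzpi : Q.-integrable setT (EFin \o (fun x => Lz x * fine (pi x))).
  move: (Radon_Nikodym_SigmaFinite.integrableM PQ (f := EFin \o Lz) Lz0E measurableT intP).
  by apply: eq_integrable => // x _ /=; rewrite [RHS]EFinM fineK.
have ipi : Q.-integrable setT (EFin \o (fun x => fine (pi x))).
  move: (Radon_Nikodym_SigmaFinite.f_integrable PQ).
  by apply: eq_integrable => // x _ /=; rewrite [RHS]fineK.
have V3 : (\int[Q]_x (Lz x * g x)%:E = \int[Pstar]_x (Lz x)%:E)%E.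
  rewrite -(Radon_Nikodym_SigmaFinite.change_of_variables PsQ (f := EFin \o Lz) Lz0E measurableT) //.
  apply: (int_null mN2 QN2) => x nx; have e2 := H2 x nx I.
  by rewrite /rho in e2; rewrite /= e2 [LHS]EFinM.
have iLzg : Q.-integrable setT (EFin \o (fun x => Lz x * g x)).
  apply/integrableP; split.
    by apply/measurable_EFinP; exact: measurable_funM.
  rewrite (eq_integral (fun x => (Lz x * g x)%:E)%E); last first.
    by move=> x _ /=; rewrite ger0_norm // mulr_ge0.
  by rewrite V3; exact: (integrable_lty measurableT intPs).
have V1 : (\int[Q]_x (Lz x * fine (pi x))%:E = \int[P]_x (Lz x)%:E)%E.
  rewrite -(Radon_Nikodym_SigmaFinite.change_of_variables PQ (f := EFin \o Lz) Lz0E measurableT) //.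
  by apply: eq_integral => x _ /=; rewrite EFinM fineK.
have V2 : (\int[Q]_x (fine (pi x))%:E = 1)%E.
  apply: (eq_trans _ (probability_setT P)); apply: esym.
  apply: (eq_trans (Radon_Nikodym_SigmaFinite.f_integral PQ (@measurableT _ (dim.-tuple R)))).
  by apply: eq_integral => x _ /=; rewrite fineK.
rewrite (int_null (G := fun x => (lam^-1 * H x)%:E) mN QN Hpt).
have iH : Q.-integrable setT (fun x => ((Lz x * fine (pi x))%:E + beta%:E * (fine (pi x))%:E)
   - ((Lz x * g x)%:E + beta%:E * (g x)%:E))%E.
  apply: integrableB => //; apply: integrableD => //; apply: integrableZl => //.
rewrite (eq_integral (fun x => lam^-1%:E * (((Lz x * fine (pi x))%:E + beta%:E * (fine (pi x))%:E)
   - ((Lz x * g x)%:E + beta%:E * (g x)%:E)))%E); last first.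
  by move=> x _; rewrite /H -!EFinM.
rewrite integralZl // integralB //; last first.
  apply: integrableD => //; exact: integrableZl.
  apply: integrableD => //; exact: integrableZl.
rewrite (integralD (f1 := fun x => (Lz x * fine (pi x))%:E)
   (f2 := fun x => (beta%:E * (fine (pi x))%:E)%E) measurableT) //; last exact: integrableZl.
rewrite (integralD (f1 := fun x => (Lz x * g x)%:E)
   (f2 := fun x => (beta%:E * (g x)%:E)%E) measurableT) //; last exact: integrableZl.
rewrite !integralZl // V1 V2 V3 gint.
have afin := integrable_fin_num measurableT intP.
have bfin := integrable_fin_num measurableT intPs.
rewrite -(fineK afin) -(fineK bfin) !mule1 -!EFinD  -!EFinM; congr EFin.
by field; rewrite gt_eqF.
Qed.
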